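(* Assume the feature groups $\boldsymbol X_{\mathcal X(1)},\dots,\boldsymbol X_{\mathcal X(M)}$ are mutually independent and $f(\boldsymbol X)=\sum_{m\in S_1}h_m(\boldsymbol X_{\mathcal X(m)})+\sum_{J\in S_2}h_J(\boldsymbol X_{\mathcal X(J)})$, where $S_1\subset\{1,\dots,M\}$, $S_2$ is a collection of two-element subsets of $\{1,\dots,M\}$, $\mathbb Eh_m(\boldsymbol X_{\mathcal X(m)})=0$ for $m\in S_1$, and $\mathbb E(h_J(\boldsymbol X_{\mathcal X(J)})\mid\boldsymbol X_{\mathcal X(l)})=0$ for every $J\in S_2$ and $l\in J$; set $h_J\equiv0$ for $J\notin\{\{m\}:m\in S_1\}\cup S_2$ and $h_m=h_{\{m\}}$. Let $K\ge1$ and let $J_1,\dots,J_{2K}$ be pairwise distinct subsets of $\{1,\dots,M\}$ with $\#J_l=1$ for $l\le K$ and $\#J_l=2$ for $K<l\le 2K$. Define $R_0\equiv0$ and $R_s(\boldsymbol X)=R_{s-1}(\boldsymbol X)+\mathbb E(f(\boldsymbol X)-R_{s-1}(\boldsymbol X)\mid\boldsymbol X_{\mathcal X(J_s)})$. Then for every $0<s\le 2K$, $$R_s(\boldsymbol X)=\sum_{l=1}^sh_{J_l}(\boldsymbol X_{\mathcal X(J_l)})+\sum_{m\in(\bigcup_{k=K+1}^sJ_k)\setminus(\bigcup_{k=1}^KJ_k)}h_m(\boldsymbol X_{\mathcal X(m)}),$$ where a sum over an empty index set is zero.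
   Context: $\boldsymbol X=(X_1,\dots,X_p)^\top$ is a random vector in $\{0,1\}^p$; $\{1,\dots,p\}$ is partitioned into disjoint nonempty feature groups $\mathcal X(1),\dots,\mathcal X(M)$; $\mathcal X(J)=\bigcup_{m\in J}\mathcal X(m)$ and $\boldsymbol X_{\mathcal X(J)}=(X_j)_{j\in\mathcal X(J)}$. The functions $h_J$ are real-valued measurable functions of $\boldsymbol X_{\mathcal X(J)}$. *)

(* Defs.v *)
From HB Require Import structures.
From mathcomp Require Export all_boot all_order all_algebra.
Set Implicit Arguments. Unset Strict Implicit. Unset Printing Implicit Defensive.
Export Order.TTheory GRing.Theory Num.Theory.
Local Open Scope ring_scope.

(* Sample space: x : {ffun 'I_p -> bool} is a value of X = (X_1,...,X_p).
   grp : 'I_p -> 'I_M assigns each feature j to its group m (X(m) = grp^-1 m). *)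
Notation cube p := {ffun 'I_p -> bool}.

Definition agree (p M : nat) (grp : 'I_p -> 'I_M) (A : {set 'I_M})
  (x y : cube p) : bool :=
  [forall j : 'I_p, (grp j \in A) ==> (x j == y j)].

Definition fun_of_groups (R : Type) (p M : nat) (grp : 'I_p -> 'I_M)
  (A : {set 'I_M}) (h : cube p -> R) : Prop :=
  forall x y, agree grp A x y -> h x = h y.

Definition is_pmf (R : numDomainType) (p : nat) (P : cube p -> R) : Prop :=
  (forall x, 0 <= P x) /\ \sum_x P x = 1.

(* Mutual independence of the groups X_{X(1)},...,X_{X(M)}: the joint pmf is
   the product of the marginal pmfs of the groups. *)
Definition groups_indep (R : numDomainType) (p M : nat) (grp : 'I_p -> 'I_M)
  (P : cube p -> R) : Prop :=
  forall x, P x = \prod_(m < M) \sum_(y | agree grp [set m] x y) P y.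

Definition expect (R : numDomainType) (p : nat) (P : cube p -> R)
  (g : cube p -> R) : R := \sum_x P x * g x.

(* E(g(X) | X_{X(A)}) evaluated at X = x (meaningful when P(X_{X(A)} = x_{X(A)}) > 0;
   all identities below are asserted only a.s., i.e. at points x with P x > 0). *)
Definition condexp (R : fieldType) (p M : nat) (grp : 'I_p -> 'I_M)
  (P : cube p -> R) (g : cube p -> R) (A : {set 'I_M}) (x : cube p) : R :=
  (\sum_(y | agree grp A x y) P y * g y) / (\sum_(y | agree grp A x y) P y).

Fixpoint Rseq (R : fieldType) (p M : nat) (grp : 'I_p -> 'I_M)
  (P : cube p -> R) (f : cube p -> R) (Js : nat -> {set 'I_M}) (s : nat)
  : cube p -> R :=
  match s with
  | O => fun _ => 0
  | s'.+1 => fun x => Rseq grp P f Js s' x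
        + condexp grp P (fun y => f y - Rseq grp P f Js s' y) (Js s) x
  end.

(* Main.v *)
Require Import Defs.
From mathcomp Require Import all_boot all_order all_algebra.
Local Open Scope ring_scope.
Set Implicit Arguments. Unset Strict Implicit.

Section Analytic.
Variables (R : realFieldType) (p M : nat) (grp : 'I_p -> 'I_M)
  (P : {ffun 'I_p -> bool} -> R).
Hypothesis Hpmf : is_pmf P.
Hypothesis Hind : groups_indep grp P.

Lemma agree_refl (A : {set 'I_M}) x : agree grp A x x.
Proof. by apply/forallP => j; apply/implyP. Qed.

Lemma agree_sym (A : {set 'I_M}) x y : agree grp A x y = agree grp A y x.
Proof.
by apply/forallP/forallP => H j; apply/implyP => Hj; move/implyP: (H j) => /(_ Hj) /eqP ->.
Qed.

Lemma agree_trans (A : {set 'I_M}) x y z : agree grp A x y -> agree grp A y z -> agree grp A x z.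
Proof.
move=> /forallP H1 /forallP H2; apply/forallP => j; apply/implyP => Hj.
by move/implyP: (H1 j) => /(_ Hj) /eqP ->; move/implyP: (H2 j) => /(_ Hj).
Qed.

Lemma agree_sub (A B : {set 'I_M}) x y : A \subset B -> agree grp B x y -> agree grp A x y.
Proof.
move=> sAB /forallP H; apply/forallP => j; apply/implyP => Hj.
by move/implyP: (H j); apply; apply: (subsetP sAB).
Qed.

Lemma agree0 x y : agree grp set0 x y.
Proof. by apply/forallP => j; rewrite in_set0. Qed.

Lemma P_ge0 x : 0 <= P x.
Proof. by case: Hpmf. Qed.

Definition NN (A : {set 'I_M}) (g : {ffun 'I_p -> bool} -> R) x := \sum_(y | agree grp A x y) P y * g y.
Definition DD (A : {set 'I_M}) x := \sum_(y | agree grp A x y) P y.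

Lemma condexpE A g x : condexp grp P g A x = NN A g x / DD A x.
Proof. by []. Qed.

Lemma DD_ge A x : P x <= DD A x.
Proof.
rewrite /DD (bigD1 x) ?agree_refl //= lerDl.
by apply: sumr_ge0 => y _; apply: P_ge0.
Qed.

Lemma DD_gt0 A x : 0 < P x -> 0 < DD A x.
Proof. by move=> Px; apply: lt_le_trans Px (DD_ge A x). Qed.

Lemma DD_agree (A : {set 'I_M}) (x x' : {ffun 'I_p -> bool}) : agree grp A x x' -> DD A x = DD A x'.
Proof.
move=> H; apply: eq_bigl => y; apply/idP/idP => H2.
  by apply: agree_trans H2; rewrite agree_sym.
by apply: agree_trans H H2.
Qed.

Lemma condexp_ext A g1 g2 x : (forall y, 0 < P y -> g1 y = g2 y) ->
  condexp grp P g1 A x = condexp grp P g2 A x.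
Proof.
move=> H; rewrite !condexpE; congr (_ / _); apply: eq_bigr => y _.
have := P_ge0 y; rewrite le0r => /orP [/eqP ->|Py]; first by rewrite !mul0r.
by rewrite H.
Qed.

Lemma condexpB A g1 g2 x :
  condexp grp P (fun y => g1 y - g2 y) A x
  = condexp grp P g1 A x - condexp grp P g2 A x.
Proof.
rewrite !condexpE -mulrBl; congr (_ / _).
rewrite /NN -sumrB; apply: eq_bigr => y _; by rewrite mulrBr.
Qed.

Lemma condexp_sum (I : finType) (X : pred I) (F : I -> {ffun 'I_p -> bool} -> R) A x :
  condexp grp P (fun y => \sum_(i in X) F i y) A x
  = \sum_(i in X) condexp grp P (F i) A x.
Proof.
rewrite !condexpE -mulr_suml; congr (_ / _).
rewrite /NN exchange_big /=; apply: eq_bigr => y _; by rewrite mulr_sumr.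
Qed.

Lemma condexp_fun A g x : fun_of_groups grp A g -> 0 < P x ->
  condexp grp P g A x = g x.
Proof.
move=> Hg Px; rewrite condexpE.
have -> : NN A g x = DD A x * g x.
  rewrite /DD mulr_suml; apply: eq_bigr => y Hy; congr (_ * _).
  by apply: Hg; rewrite agree_sym.
by rewrite mulrAC divff ?mul1r // lt0r_neq0 // DD_gt0.
Qed.

Lemma DD0 x : DD set0 x = 1.
Proof.
case: Hpmf => _ <-; apply: eq_bigl => y; by rewrite agree0.
Qed.

Lemma condexp0 g x : condexp grp P g set0 x = expect P g.
Proof.
rewrite condexpE DD0 divr1; apply: eq_bigl => y; by rewrite agree0.
Qed.

Lemma agreeP (A : {set 'I_M}) (x y : {ffun 'I_p -> bool}) :
  reflect (forall j, grp j \in A -> x j = y j) (agree grp A x y).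
Proof.
apply: (iffP forallP) => H j.
  by move=> Hj; move/implyP: (H j) => /(_ Hj) /eqP.
by apply/implyP => Hj; apply/eqP; apply: H.
Qed.

Definition sw (B : {set 'I_M}) (y z : {ffun 'I_p -> bool}) : {ffun 'I_p -> bool} :=
  [ffun j => if grp j \in B then y j else z j].

Definition marg m (w : {ffun 'I_p -> bool}) := \sum_(u | agree grp [set m] w u) P u.

Lemma marg_agree m (w w' : {ffun 'I_p -> bool}) : agree grp [set m] w w' -> marg m w = marg m w'.
Proof.
move=> H; apply: eq_bigl => u; apply/idP/idP => H2.
  by apply: agree_trans H2; rewrite agree_sym.
by apply: agree_trans H H2.
Qed.

Lemma marg_sw B m y z : marg m (sw B y z) = if m \in B then marg m y else marg m z.
Proof.
case: ifP => mB; apply: marg_agree; apply/agreeP => j; rewrite in_set1 => /eqP Hj;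
by rewrite ffunE Hj mB.
Qed.

Lemma P_sw B y z : P (sw B y z) * P (sw B z y) = P y * P z.
Proof.
rewrite (Hind (sw B y z)) (Hind (sw B z y)) (Hind y) (Hind z) -!big_split /=.
apply: eq_bigr => m _; rewrite -/(marg m _) -/(marg m (sw B z y)) -/(marg m y) -/(marg m z).
by rewrite !marg_sw; case: ifP => _ //; rewrite mulrC.
Qed.

Lemma swK B y z : sw B (sw B y z) (sw B z y) = y.
Proof. by apply/ffunP => j; rewrite !ffunE; case: (grp j \in B). Qed.

Lemma swap_lemma (A B : {set 'I_M}) g x : fun_of_groups grp B g ->
  NN A g x * DD (A :&: B) x = NN (A :&: B) g x * DD A x.
Proof.
move=> Hg; rewrite /NN /DD !mulr_suml.
under eq_bigr do rewrite mulr_sumr.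
under [RHS]eq_bigr do rewrite mulr_sumr.
rewrite !pair_big_dep /=.
pose sig (q : {ffun 'I_p -> bool} * {ffun 'I_p -> bool}) := (sw B q.1 q.2, sw B q.2 q.1).
have sigK : cancel sig sig by case=> y z; rewrite /sig /= !swK.
rewrite (reindex_inj (can_inj sigK)) /=.
apply: eq_big.
  case=> y z /=; apply/andP/andP.
    case=> /agreeP H1 /agreeP H2; split; apply/agreeP => j Hj.
      by move: Hj; rewrite inE => /andP [jA jB]; rewrite H1 // ffunE jB.
    case jB: (grp j \in B).
      by rewrite H2 ?ffunE ?jB // inE Hj jB.
    by rewrite H1 // ffunE jB.
  case=> /agreeP G1 /agreeP G2; split; apply/agreeP => j Hj.
    rewrite ffunE; case: ifP => jB; first by rewrite G1 // inE Hj jB.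
    by rewrite G2.
  by rewrite ffunE; move: Hj; rewrite inE => /andP [jA ->]; rewrite G2.
case=> y z _ /=.
have -> : g (sw B y z) = g y.
  by apply: Hg; apply/agreeP => j Hj; rewrite ffunE Hj.
by rewrite mulrAC P_sw mulrAC.
Qed.

Lemma condexp_indep (A B : {set 'I_M}) g x : fun_of_groups grp B g -> 0 < P x ->
  condexp grp P g A x = condexp grp P g (A :&: B) x.
Proof.
move=> Hg Px; rewrite !condexpE; apply/eqP.
rewrite eqr_div ?lt0r_neq0 ?DD_gt0 //.
by rewrite swap_lemma.
Qed.

Lemma tower (A : {set 'I_M}) g :
  \sum_x P x * condexp grp P g A x = expect P g.
Proof.
have E1 : forall x, P x * condexp grp P g A x =
    \sum_(y | agree grp A x y) (P y * g y) * (P x / DD A y).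
  move=> x; rewrite condexpE mulrCA /NN mulr_suml; apply: eq_bigr => y Hy.
  by rewrite (DD_agree Hy).
under eq_bigr do rewrite E1.
rewrite (exchange_big_dep xpredT) //=.
rewrite /expect; apply: eq_bigr => y _.
rewrite -mulr_sumr -mulr_suml.
have -> : \sum_(i | true && agree grp A i y) P i = DD A y.
  by apply: eq_bigl => i; rewrite agree_sym.
have := P_ge0 y; rewrite le0r => /orP [/eqP ->|Py]; first by rewrite !mul0r.
by rewrite divff ?mulr1 // lt0r_neq0 // DD_gt0.
Qed.

End Analytic.

Section Main.
Variables (R : realFieldType) (p M : nat) (grp : 'I_p -> 'I_M)
  (P : {ffun 'I_p -> bool} -> R)
  (S1 : {set 'I_M}) (S2 : {set {set 'I_M}})
  (h : {set 'I_M} -> {ffun 'I_p -> bool} -> R)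
  (f : {ffun 'I_p -> bool} -> R).
Hypothesis Hpmf : is_pmf P.
Hypothesis Hind : groups_indep grp P.
Hypothesis Hfun : forall J, fun_of_groups grp J (h J).
Hypothesis HS2 : forall J, J \in S2 -> #|J| = 2%N.
Hypothesis Hzero : forall J, J \notin [set [set m] | m in S1] :|: S2 -> forall x, h J x = 0.
Hypothesis Hf : forall x, f x = \sum_(m in S1) h [set m] x + \sum_(J in S2) h J x.
Hypothesis Hexp : forall m, m \in S1 -> expect P (h [set m]) = 0.
Hypothesis Hce : forall J l, J \in S2 -> l \in J ->
     forall x, 0 < P x -> condexp grp P (h J) [set l] x = 0.

Lemma h0 x : h set0 x = 0.
Proof.
apply: Hzero; rewrite inE negb_or; apply/andP; split.
  apply/imsetP => -[m _ /setP /(_ m)]; by rewrite !inE eqxx.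
by apply/negP => /HS2; rewrite cards0.
Qed.

Lemma f_all x : f x = \sum_(J : {set 'I_M}) h J x.
Proof.
rewrite (bigID (fun J => J \in [set [set m] | m in S1] :|: S2)) /=.
rewrite [X in _ = _ + X]big1 ?addr0; last by move=> J HJ; apply: Hzero.
rewrite (big_setID S2).
have -> : ([set [set m] | m in S1] :|: S2) :&: S2 = S2.
  by apply/setP => J; rewrite !inE; case: (J \in S2); rewrite ?orbT ?andbF.
have -> : ([set [set m] | m in S1] :|: S2) :\: S2 = [set [set m] | m in S1].
  apply/setP => J; rewrite !inE; case HJ: (J \in S2); last by rewrite orbF.
  rewrite /=; apply/esym/imsetP => -[m _ EJ]; move: (HS2 HJ); rewrite EJ cards1.
  by [].
rewrite big_imset /=; last by move=> m1 m2 _ _; apply: set1_inj.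
by rewrite Hf addrC.
Qed.

Lemma expect_S2 J : J \in S2 -> expect P (h J) = 0.
Proof.
move=> HJ.
have [l lJ] : exists l, l \in J.
  by apply/card_gt0P; rewrite (HS2 HJ).
rewrite -(tower grp Hpmf [set l]) big1 // => x _.
have := P_ge0 Hpmf x; rewrite le0r => /orP [/eqP ->|Px]; first by rewrite mul0r.
by rewrite (Hce HJ lJ Px) mulr0.
Qed.

Lemma condexp_h J A x : 0 < P x ->
  condexp grp P (h J) A x = if J \subset A then h J x else 0.
Proof.
move=> Px; case: ifP => sub.
  apply: condexp_fun => // y z Hyz; apply: Hfun; exact: agree_sub Hyz.
case Supp: (J \in [set [set m] | m in S1] :|: S2); last first.
  rewrite condexpE /NN big1 ?mul0r // => y _.
  by rewrite Hzero ?Supp // mulr0.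
rewrite (condexp_indep Hpmf Hind A (@Hfun J) Px).
move: Supp; rewrite inE => /orP [/imsetP [m mS1 EJ]|HJ].
  have -> : A :&: J = set0.
    apply/setP => k; rewrite !inE EJ in_set1; apply/negP => /andP [kA /eqP km].
    by move: sub; rewrite EJ sub1set -km kA.
  by rewrite condexp0 // EJ Hexp.
have : (#|A :&: J| < 2)%N.
  rewrite -(HS2 HJ); apply: proper_card; rewrite properE subsetIr /=.
  by rewrite subsetIidr sub.
case E: #|A :&: J| => [|[|//]] _.
  by rewrite (cards0_eq E) condexp0 // expect_S2.
have /cards1P [l El] : #|A :&: J| == 1%N by rewrite E.
rewrite El; apply: Hce => //.
have : l \in A :&: J by rewrite El set11.
by rewrite inE => /andP [].

Qed.

End Main.
Lemma mem_bigU (T : finType) (r : seq nat) (F : nat -> {set T}) m :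
  (m \in \big[@setU _/set0]_(k <- r) F k) = has (fun k => m \in F k) r.
Proof. elim: r => [|k r IH]; by rewrite ?big_nil ?in_set0 // big_cons in_setU IH. Qed.

Section Comb.
Variables (M : nat) (K : nat) (Js : nat -> {set 'I_M}).
Hypothesis Hdist : forall l l', (1 <= l <= 2 * K)%N -> (1 <= l' <= 2 * K)%N -> l <> l' ->
     Js l <> Js l'.
Hypothesis Hc1 : forall l, (1 <= l <= K)%N -> #|Js l| = 1%N.
Hypothesis Hc2 : forall l, (K < l <= 2 * K)%N -> #|Js l| = 2%N.

Definition U s := \bigcup_(K.+1 <= k < s.+1) Js k.
Definition V := \bigcup_(1 <= k < K.+1) Js k.
Definition W1 s := [set Js (nat_of_ord l) | l in [set l : 'I_s.+1 | (0 < l)%N]].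
Definition W2 s := [set [set m] | m in U s :\: V].
Definition W s := W1 s :|: W2 s.

Lemma inW1 s J : reflect (exists2 l, (0 < l <= s)%N & J = Js l) (J \in W1 s).
Proof.
apply: (iffP imsetP) => [[l]|[l /andP [l0 ls] ->]].
  by rewrite inE => l0 ->; exists l => //; rewrite l0 -ltnS ltn_ord.
by exists (inord l : 'I_s.+1); rewrite ?inE inordK ?ltnS.
Qed.

Lemma inU s m : reflect (exists2 k, (K < k <= s)%N & m \in Js k) (m \in U s).
Proof.
rewrite /U mem_bigU; apply: (iffP hasP) => [[k]|[k]].
  by rewrite mem_index_iota ltnS => Hk Hm; exists k.
by move=> Hk Hm; exists k; rewrite // mem_index_iota ltnS.
Qed.

Lemma inV m : reflect (exists2 k, (0 < k <= K)%N & m \in Js k) (m \in V).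
Proof.
rewrite /V mem_bigU; apply: (iffP hasP) => [[k]|[k]].
  by rewrite mem_index_iota ltnS => Hk Hm; exists k.
by move=> Hk Hm; exists k; rewrite // mem_index_iota ltnS.
Qed.

Lemma card_one_eq (J A : {set 'I_M}) : J != set0 -> J \subset A -> #|A| = 1%N -> J = A.
Proof.
move=> nz sub cA.
have cJ : #|J| = #|A|.
  by apply/eqP; rewrite eqn_leq subset_leq_card //= cA card_gt0.
by apply/setP; apply/(subset_cardP cJ).
Qed.

Lemma stepW s J : (s < 2 * K)%N -> J != set0 ->
  (J \in W s) || (J \subset Js s.+1) = (J \in W s.+1).
Proof.
move=> sK nz; apply/idP/idP.
  case/orP.
    rewrite inE => /orP [/inW1 [l /andP [l0 ls] ->]|/imsetP [m]].
      by rewrite inE; apply/orP; left; apply/inW1; exists l; rewrite // l0 ltnW.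
    rewrite inE => /andP [mV /inU [k /andP [Kk ks] mk]] ->.
    rewrite inE; apply/orP; right; apply/imsetP; exists m => //.
    by rewrite inE mV; apply/inU; exists k; rewrite // Kk ltnW.
  move=> sub; rewrite inE; case: (leqP s.+1 K) => sK1.
    have -> : J = Js s.+1 by apply: card_one_eq => //; apply: Hc1; rewrite sK1.
    by apply/orP; left; apply/inW1; exists s.+1; rewrite ?leqnn.
  have c2 : #|Js s.+1| = 2%N by apply: Hc2; rewrite sK1.
  have : (0 < #|J| <= 2)%N by rewrite card_gt0 nz -c2 subset_leq_card.
  case/andP; case E: #|J| => [//|[|[|//]]] _ _.
    have /cards1P [m Em] : #|J| == 1%N by rewrite E.
    have mA : m \in Js s.+1 by move/subsetP: sub; apply; rewrite Em set11.
    case mV: (m \in V).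
      case/inV: mV => k /andP [k0 kK] mk.
      have Ek : J = Js k.
        by apply: card_one_eq; rewrite ?Hc1 ?k0 // ?Em ?sub1set // -Em; apply/set0Pn; exists m; rewrite Em set11.
      by apply/orP; left; apply/inW1; exists k => //; rewrite k0 (leq_trans kK) // ltnW.
    apply/orP; right; apply/imsetP; exists m => //.
    by rewrite inE mV /=; apply/inU; exists s.+1; rewrite ?sK1 ?leqnn.
  have -> : J = Js s.+1.
    by apply/setP; apply/subset_cardP; rewrite ?E ?c2.
  by apply/orP; left; apply/inW1; exists s.+1; rewrite ?leqnn.
rewrite inE => /orP [/inW1 [l /andP [l0 ls] ->]|/imsetP [m]].
  move: ls; rewrite leq_eqVlt => /orP [/eqP ->|ls]; first by rewrite subxx orbT.
  by rewrite inE; apply/orP; left; apply/orP; left; apply/inW1; exists l; rewrite // l0 -ltnS.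
rewrite inE => /andP [mV /inU [k /andP [Kk ks] mk]] ->.
move: ks; rewrite leq_eqVlt => /orP [/eqP Ek|ks].
  by rewrite -Ek sub1set mk orbT.
rewrite inE; apply/orP; left; apply/orP; right; apply/imsetP; exists m => //.
by rewrite inE mV; apply/inU; exists k; rewrite // Kk -ltnS.
Qed.

Lemma sumW (Z : zmodType) (F : {set 'I_M} -> Z) s : (s <= 2 * K)%N ->
  \sum_(J in W s) F J = \sum_(1 <= l < s.+1) F (Js l) + \sum_(m in U s :\: V) F [set m].
Proof.
move=> s2K.
rewrite /W (big_setID (W1 s)).
have -> : (W1 s :|: W2 s) :&: W1 s = W1 s.
  by apply/setP => J; rewrite !inE; case: (J \in W1 s); rewrite ?andbF.
have -> : (W1 s :|: W2 s) :\: W1 s = W2 s.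
  apply/setP => J; rewrite !inE; case H1: (J \in W1 s); rewrite /= ?andbT //.
  apply/esym/negP => /imsetP [m]; rewrite inE => /andP [mV _] EJ.
  case/inW1: H1 => l /andP [l0 ls] El.
  case: (leqP l K) => lK.
    move/negP: mV; apply; apply/inV; exists l; rewrite ?l0 //.
    by rewrite -El EJ set11.
  have := Hc2 (l:=l); rewrite lK (leq_trans ls s2K) => /(_ isT).
  by rewrite -El EJ cards1.
congr (_ + _); last by rewrite big_imset //= => m1 m2 _ _; apply: set1_inj.
rewrite big_imset /=.
  by rewrite big_geq_mkord; apply: eq_bigl => l; rewrite inE.
move=> l l'; rewrite !inE => l0 l'0 E; apply/val_inj => /=.
apply/eqP; apply/negP => /negP ne; apply: (Hdist _ _ _ E).
- by rewrite l0 (leq_trans _ s2K) // -ltnS.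
- by rewrite l'0 (leq_trans _ s2K) // -ltnS.
- by move/eqP: ne.
Qed.

End Comb.
Theorem mainTheorem11 (R : realFieldType) (p M : nat) (grp : 'I_p -> 'I_M)
  (P : {ffun 'I_p -> bool} -> R)
  (S1 : {set 'I_M}) (S2 : {set {set 'I_M}})
  (h : {set 'I_M} -> {ffun 'I_p -> bool} -> R)
  (f : {ffun 'I_p -> bool} -> R)
  (K : nat) (Js : nat -> {set 'I_M}) :
  (forall m : 'I_M, exists j : 'I_p, grp j = m) ->
  is_pmf P ->
  groups_indep grp P ->
  (forall J, fun_of_groups grp J (h J)) ->
  (forall J, J \in S2 -> #|J| = 2%N) ->
  (forall J, J \notin [set [set m] | m in S1] :|: S2 -> forall x, h J x = 0) ->
  (forall x, f x = \sum_(m in S1) h [set m] x + \sum_(J in S2) h J x) ->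
  (forall m, m \in S1 -> expect P (h [set m]) = 0) ->
  (forall J l, J \in S2 -> l \in J ->
     forall x, 0 < P x -> condexp grp P (h J) [set l] x = 0) ->
  (1 <= K)%N ->
  (forall l l', (1 <= l <= 2 * K)%N -> (1 <= l' <= 2 * K)%N -> l <> l' ->
     Js l <> Js l') ->
  (forall l, (1 <= l <= K)%N -> #|Js l| = 1%N) ->
  (forall l, (K < l <= 2 * K)%N -> #|Js l| = 2%N) ->
  forall s, (0 < s <= 2 * K)%N ->
  forall x, 0 < P x ->
    Rseq grp P f Js s x =
      \sum_(1 <= l < s.+1) h (Js l) x
      + \sum_(m in (\bigcup_(K.+1 <= k < s.+1) Js k)
                   :\: (\bigcup_(1 <= k < K.+1) Js k)) h [set m] x.
Proof.
move=> Hgrp Hpmf Hind Hfun HS2 Hzero Hf Hexp Hce K1 Hdist Hc1 Hc2.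
have CH := condexp_h Hpmf Hind Hfun HS2 Hzero Hexp Hce.
have H0 := h0 HS2 Hzero.
have FA := f_all HS2 Hzero Hf.
have key : forall s, (s <= 2 * K)%N -> forall x, 0 < P x ->
    Rseq grp P f Js s x = \sum_(J in W K Js s) h J x.
  elim=> [|s IH] s2K x Px.
    rewrite big1 //= => J; rewrite inE => /orP [/inW1 [l /andP [l0 ls]] _|].
      by move: (leq_trans l0 ls).
    by case/imsetP => m; rewrite inE => /andP [_ /inU [k /andP [Kk ks]]]; by move: (leq_trans (leq_ltn_trans (leq0n K) Kk) ks).
  have s2K' : (s <= 2 * K)%N by apply: ltnW.
  rewrite /= (IH s2K' x Px) condexpB.
  set A := Js s.+1.
  have E1 : condexp grp P f A x = \sum_(J : {set 'I_M} | J \subset A) h J x.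
    rewrite (condexp_ext grp Hpmf A (g2 := fun y => \sum_J h J y)); last by move=> y _; apply: FA.
    rewrite condexp_sum [RHS]big_mkcond; apply: eq_bigr => J _; exact: CH.
  have E2 : condexp grp P (Rseq grp P f Js s) A x = \sum_(J in W K Js s | J \subset A) h J x.
    rewrite (condexp_ext grp Hpmf A (g2 := fun y => \sum_(J in W K Js s) h J y)); last first.
      by move=> y Py; apply: IH.
    rewrite condexp_sum big_mkcond [RHS]big_mkcond; apply: eq_bigr => J _.
    rewrite CH //; by case: (J \in W K Js s).
  rewrite E1 E2.
  have E3 : \sum_(J in W K Js s.+1) h J x =
      \sum_(J : {set 'I_M}) (if (J \in W K Js s) || (J \subset A) then h J x else 0).
    rewrite big_mkcond; apply: eq_bigr => J _.
    case: (eqVneq J set0) => [->|nz]; first by rewrite H0; case: ifP; case: ifP.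
    by rewrite (stepW Hc1 Hc2 s2K nz).
  rewrite (big_mkcond (fun J => J \in W K Js s)) [X in _ + (X - _)]big_mkcond [X in _ + (_ - X)]big_mkcond.
  rewrite E3.
  rewrite -sumrB -big_split; apply: eq_bigr => J _ /=.
  case: (J \in W K Js s); case: (J \subset A) => /=;
  by rewrite ?subrr ?addr0 ?subr0 ?add0r ?sub0r ?addrN.
move=> s /andP [s0 s2K] x Px.
by rewrite key // (sumW Hdist Hc2).
Qed.
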